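(* (Pasting Lemma in $\mathsf{PsTop}$.) Let $X$ be a pseudotopological space and let $\{X_j\}_{j\in J}$ be a cover of $X$ such that either (1) every $X_j$ is open in the topological space $RX$, or (2) every $X_j$ is closed in $RX$ and the family $\{X_j\}_{j\in J}$ is locally finite in $RX$ (every point has a neighbourhood in $RX$ meeting only finitely many $X_j$). Let $Y$ be a pseudotopological space and $f\colon X\to Y$ a function such that each restriction $f_j=f|_{X_j}\colon X_j\to Y$ is continuous, where $X_j$ carries the subspace pseudotopology. Then $f$ is continuous.
   Context: For a set $X$, $U(X)$ denotes the set of ultrafilters on $X$ and $\dot x$ the principal ultrafilter at $x\in X$. For a map $f\colon X\to Y$ and a filter $\mathscr F$ on $X$, $f_*\mathscr F=\{S\subset Y: f^{-1}(S)\in\mathscr F\}$ (an ultrafilter if $\mathscr F$ is). A pseudotopological structure on a set $X$ is a relation $u\subset U(X)\times X$ with $(\dot x,x)\in u$ for all $x\in X$; one writes $\mathscr U\to x$ for $(\mathscr U,x)\in u$, and $(X,u)$ is called a pseudotopological space. A map $f$ between pseudotopological spaces is continuous if $\mathscr U\to x$ implies $f_*\mathscr U\to f(x)$. For a subset $A\subset X$ with inclusion $i$, the subspace pseudotopology on $A$ is: $\mathscr U\to a$ in $A$ iff $i_*\mathscr U\to a$ in $X$. For a pseudotopological space $X$, $RX$ is the topological space with the same underlying set in which a set $S$ is open iff $S\in\mathscr U$ whenever $\mathscr U\to x$ with $x\in S$. *)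

(* Defs.v *)
From Stdlib Require Import List.


Definition setfam (X : Type) := (X -> Prop) -> Prop.

Definition is_filter {X : Type} (F : setfam X) : Prop :=
  F (fun _ => True) /\
  (forall S T, F S -> F T -> F (fun x => S x /\ T x)) /\
  (forall S T : X -> Prop, (forall x, S x -> T x) -> F S -> F T) /\
  ~ F (fun _ => False).

Definition is_ultrafilter {X : Type} (F : setfam X) : Prop :=
  is_filter F /\ forall S, F S \/ F (fun x => ~ S x).

Definition principal {X : Type} (x : X) : setfam X := fun S => S x.

Definition pushf {X Y : Type} (f : X -> Y) (F : setfam X) : setfam Y :=
  fun S => F (fun x => S (f x)).

(* A pseudotopological space: a relation between ultrafilters and points
   containing every (x-dot, x). The relation [conv] is only ever consulted
   on ultrafilters. *)
Record PsTop := {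
  pt_carrier :> Type;
  conv : setfam pt_carrier -> pt_carrier -> Prop;
  conv_principal : forall x, conv (principal x) x
}.

Definition ps_continuous (X Y : PsTop) (f : X -> Y) : Prop :=
  forall (U : setfam X) (x : X), is_ultrafilter U -> conv X U x ->
    conv Y (pushf f U) (f x).

Definition sub_conv (X : PsTop) (A : X -> Prop)
  (U : setfam {x : X | A x}) (a : {x : X | A x}) : Prop :=
  conv X (pushf (@proj1_sig X A) U) (proj1_sig a).

Lemma sub_conv_principal (X : PsTop) (A : X -> Prop) (a : {x : X | A x}) :
  sub_conv X A (principal a) a.
Proof. exact (conv_principal X (proj1_sig a)). Qed.

Definition subspace (X : PsTop) (A : X -> Prop) : PsTop :=
  {| pt_carrier := {x : X | A x};
     conv := sub_conv X A;
     conv_principal := sub_conv_principal X A |}.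

Definition restrict (X Y : PsTop) (f : X -> Y) (A : X -> Prop) :
  subspace X A -> Y := fun a => f (proj1_sig a).

Definition RX_open (X : PsTop) (S : X -> Prop) : Prop :=
  forall (U : setfam X) (x : X), is_ultrafilter U -> conv X U x -> S x -> U S.

Definition RX_closed (X : PsTop) (S : X -> Prop) : Prop :=
  RX_open X (fun x => ~ S x).

Definition RX_nbhd (X : PsTop) (x : X) (N : X -> Prop) : Prop :=
  exists O : X -> Prop, RX_open X O /\ O x /\ (forall y, O y -> N y).

Definition RX_locally_finite (X : PsTop) (J : Type) (Xs : J -> X -> Prop) : Prop :=
  forall x : X, exists N : X -> Prop, RX_nbhd X x N /\
    exists l : list J, forall j, (exists y, N y /\ Xs j y) -> In j l.

(* Main.v *)
Require Import Defs.
From Stdlib Require Import List.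
From Stdlib Require Import Classical FunctionalExtensionality PropExtensionality ProofIrrelevance.

Lemma uf_mono {X : Type} (U : setfam X) (S T : X -> Prop) :
  is_ultrafilter U -> (forall x, S x -> T x) -> U S -> U T.
Proof. intros [[_ [_ [H _]]] _]; eauto. Qed.

Lemma uf_inter {X : Type} (U : setfam X) (S T : X -> Prop) :
  is_ultrafilter U -> U S -> U T -> U (fun x => S x /\ T x).
Proof. intros [[_ [H _]] _]; eauto. Qed.

Lemma uf_restr_eq {X : Type} (U : setfam X) (A : X -> Prop) :
  is_ultrafilter U -> U A -> forall T, U (fun y => A y -> T y) = U T.
Proof.
  intros HU HA T. apply propositional_extensionality; split; intro H.
  - apply (uf_mono U (fun y => A y /\ (A y -> T y))); auto; [intros y [a b]; auto| apply uf_inter; auto].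
  - apply (uf_mono U T); auto.
Qed.

Definition restrU {X : Type} (A : X -> Prop) (U : setfam X) : setfam {x : X | A x} :=
  fun S => U (fun y => forall h : A y, S (exist _ y h)).

Lemma restrU_uf {X : Type} (A : X -> Prop) (U : setfam X) :
  is_ultrafilter U -> U A -> is_ultrafilter (restrU A U).
Proof.
  intros HU HA. unfold restrU. split; [split; [|split; [|split]]|].
  - apply (uf_mono U (fun _ => True)); auto. apply HU.
  - intros S T HS HT. apply (uf_mono U _ _ HU (fun y H h => conj (proj1 H h) (proj2 H h))).
    apply uf_inter; auto.
  - intros S T HST HS. apply (uf_mono U _ _ HU (fun y H h => HST _ (H h))); auto.
  - intros HF. apply HU. apply (uf_mono U (fun y => A y /\ (forall h : A y, False))); auto.
    + intros y [h H]; exact (H h).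
    + apply uf_inter; auto.
  - intros S. destruct (proj2 HU (fun y => forall h : A y, S (exist _ y h))) as [H|H]; [left; auto|right].
    refine (uf_mono U _ _ HU _ H). intros y Hy h HS. apply Hy. intro h'.
    rewrite (proof_irrelevance _ h' h). exact HS.
Qed.

Lemma find_j (X : PsTop) (J : Type) (Xs : J -> X -> Prop) (U : setfam X) (x : X) :
  (forall x : X, exists j, Xs j x) ->
  ((forall j, RX_open X (Xs j)) \/
   ((forall j, RX_closed X (Xs j)) /\ RX_locally_finite X J Xs)) ->
  is_ultrafilter U -> conv X U x -> exists j, Xs j x /\ U (Xs j).
Proof.
  intros Hcov [Hop|[Hcl Hlf]] HU Hc.
  - destruct (Hcov x) as [j Hj]. exists j; split; auto. eapply Hop; eauto.
  - apply NNPP; intro Hn.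
    assert (Hc' : forall j, U (fun y => ~ Xs j y)).
    { intro j. destruct (classic (Xs j x)) as [Hx|Hx].
      - destruct (proj2 HU (Xs j)) as [H|H]; auto. exfalso; eauto.
      - eapply Hcl; eauto. }
    destruct (Hlf x) as [N [[O [HO [HOx HON]]] [l Hl]]].
    assert (HUO : U O) by (eapply HO; eauto).
    assert (Hind : forall l', U (fun y => O y /\ forall j, In j l' -> ~ Xs j y)).
    { induction l' as [|a l' IH].
      - refine (uf_mono U O _ HU _ HUO). intros y Hy; split; [exact Hy|]. intros j [].
      - refine (uf_mono U _ _ HU _ (uf_inter U _ _ HU IH (Hc' a))).
        intros y [[H1 H2] H3]. split; auto. intros j [<-|Hj]; auto. }
    apply HU. refine (uf_mono U _ _ HU _ (Hind l)).
    intros y [H1 H2]. destruct (Hcov y) as [j Hj].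
    apply (H2 j); auto. apply Hl. exists y; split; auto.
Qed.

Theorem lemma3p2 (X Y : PsTop) (J : Type) (Xs : J -> X -> Prop) (f : X -> Y) :
  (forall x : X, exists j, Xs j x) ->
  ((forall j, RX_open X (Xs j)) \/
   ((forall j, RX_closed X (Xs j)) /\ RX_locally_finite X J Xs)) ->
  (forall j, ps_continuous (subspace X (Xs j)) Y (restrict X Y f (Xs j))) ->
  ps_continuous X Y f.
Proof.
  intros Hcov Hcase Hf U x HU Hc.
  destruct (find_j X J Xs U x Hcov Hcase HU Hc) as [j [Hjx HUj]].
  pose proof (Hf j (restrU (Xs j) U) (exist _ x Hjx) (restrU_uf _ _ HU HUj)) as H.
  assert (E1 : pushf (@proj1_sig X (Xs j)) (restrU (Xs j) U) = U).
  { apply functional_extensionality; intro T. unfold pushf, restrU; simpl.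
    apply (uf_restr_eq U (Xs j) HU HUj T). }
  assert (E2 : pushf (restrict X Y f (Xs j)) (restrU (Xs j) U) = pushf f U).
  { apply functional_extensionality; intro T. unfold pushf, restrU, restrict; simpl.
    apply (uf_restr_eq U (Xs j) HU HUj (fun y => T (f y))). }
  rewrite <- E2. apply H. simpl. unfold sub_conv. rewrite E1. exact Hc.
Qed.
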